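(* Consider the deterministic tandem system TSC(RO) described in the context, with $n$ jobs, satisfying for some constants $\lambda>0$, $\mu_1,\dots,\mu_J>0$, $\Gamma_a,\Gamma_{s,1},\dots,\Gamma_{s,J}\ge 0$: $$\Big|\sum_{i=k+1}^{n}U_i-\lambda^{-1}(n-k)\Big|\le \Gamma_a\,\phi(n-k),\qquad k=0,1,\dots,n-1,$$ $$\Big|\sum_{i=k+1}^{n}V^j_i-\mu_j^{-1}(n-k)\Big|\le \Gamma_{s,j}\,\phi(n-k),\qquad k=0,1,\dots,n-1,\ j=1,\dots,J.$$ Let $\Gamma=\max(\Gamma_a,\Gamma_{s,1},\dots,\Gamma_{s,J})$ and assume $\lambda\Gamma\ge e^{2e}$ and $\rho^*:=\lambda/\min_j\mu_j<1$. Then the sojourn time of the $n$-th job satisfies $$W_n\le \frac{7J^2\Gamma^2\lambda}{1-\rho^*}\,\ln\ln\frac{J\lambda\Gamma}{1-\rho^*}+J\lambda^{-1}.$$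
   Context: $\phi(x)=\sqrt{x\ln\ln x}$ for $x\ge e^e$ and $\phi(x)=1$ for $x<e^e$. TSC(RO): servers $S_1,\dots,S_J$ in tandem, initially empty, $n$ jobs. Job $i$ arrives to the buffer of $S_1$ at time $\sum_{l=1}^i U_l$ (nonnegative deterministic interarrival times $U_1,\dots,U_n$, $U_1$ being the arrival time of job 1). Each server processes jobs in FIFO order, is work-conserving, buffers are infinite; job $i$ requires service time $V^j_i\ge 0$ at $S_j$; after service at $S_j$ it joins the buffer of $S_{j+1}$, and after $S_J$ it leaves. The sojourn time $W_n$ of job $n$ is the time between its arrival at $S_1$ and its service completion at $S_J$. *)

(* Defs.v *)
From Stdlib Require Import Reals Lra List.
Import ListNotations.
Open Scope R_scope.

Definition phi (x : R) : R :=
  if Rle_dec (exp (exp 1)) x then sqrt (x * ln (ln x)) else 1.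

(* seg_sum f k n = sum_{i=k+1}^{n} f i  (empty, i.e. 0, if n <= k). *)
Definition seg_sum (f : nat -> R) (k n : nat) : R :=
  fold_right Rplus 0 (map f (seq (S k) (n - k))).

Definition arrival (U : nat -> R) (i : nat) : R := seg_sum U 0 i.

(* Service-completion (departure) time of job i at server S_j in the tandem of
   FIFO, work-conserving, infinite-buffer servers, initially empty:
     D_0(i)   = arrival time of job i,
     D_j(0)   = 0  (no job 0; all times are >= 0),
     D_j(i)   = max(D_{j-1}(i), D_j(i-1)) + V^j_i   for j, i >= 1.
   V j i is the service time of job i at server S_j (1-based indices). *)
Fixpoint depart (U : nat -> R) (V : nat -> nat -> R) (j : nat) (i : nat) : R :=
  match j with
  | O => arrival U i
  | S j' =>
      (fix d (i : nat) : R :=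
         match i with
         | O => 0
         | S i' => Rmax (depart U V j' (S i')) (d i') + V (S j') (S i')
         end) i
  end.

Definition sojourn (U : nat -> R) (V : nat -> nat -> R) (J n : nat) : R :=
  depart U V J n - arrival U n.

Definition Gamma_max (Ga : R) (Gs : nat -> R) (J : nat) : R :=
  fold_right Rmax Ga (map Gs (seq 1 J)).

Definition mu_min (mu : nat -> R) (J : nat) : R :=
  fold_right Rmin (mu 1%nat) (map mu (seq 1 J)).

(* Main.v *)
Require Import Defs.
From Stdlib Require Import Reals Lra Lia List.
Open Scope R_scope.

Lemma ln_le' x y : 0 < x -> x <= y -> ln x <= ln y.
Proof. intros H1 H2. destruct (Rle_lt_or_eq_dec _ _ H2) as [H|H].
- left. apply ln_increasing; lra.
- subst; lra. Qed.

Lemma ln_le_sub1 x : 0 < x -> ln x <= x - 1.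
Proof. intros H. pose proof (exp_ineq1_le (ln x)). rewrite exp_ln in H0; lra. Qed.

Lemma e_ge2 : 2 <= exp 1.
Proof. pose proof (exp_ineq1_le 1). lra. Qed.

Lemma ee_gt1 : 1 < exp (exp 1).
Proof. pose proof (exp_ineq1_le (exp 1)). pose proof e_ge2. lra. Qed.

Lemma lnln_ge1 x : exp (exp 1) <= x -> 1 <= ln (ln x).
Proof. intros H. pose proof ee_gt1.
  assert (exp 1 <= ln x) by (rewrite <- (ln_exp (exp 1)); apply ln_le'; auto; apply exp_pos).
  rewrite <- (ln_exp 1) at 1. apply ln_le'; auto. apply exp_pos. Qed.

Lemma phi_nonneg x : 0 <= phi x.
Proof. unfold phi. destruct Rle_dec. apply sqrt_pos. lra. Qed.

Lemma phi_mono a b : a <= b -> phi a <= phi b.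
Proof. intros H. unfold phi. pose proof ee_gt1.
  destruct (Rle_dec (exp (exp 1)) a); destruct (Rle_dec (exp (exp 1)) b); try lra.
  - apply sqrt_le_1_alt. pose proof (lnln_ge1 a r). pose proof (lnln_ge1 b r0).
    assert (ln (ln a) <= ln (ln b)).
    { apply ln_le'. assert (1 <= ln (ln a)) by auto.
      rewrite <- (ln_exp 1) in H3. 
      destruct (Rle_lt_dec (ln a) 0). exfalso. 
      assert (exp 1 <= ln a) by (rewrite <- (ln_exp (exp 1)); apply ln_le'; auto; apply exp_pos).
      pose proof e_ge2; lra. lra.
      apply ln_le'; lra. }
    nra.
  - rewrite <- sqrt_1. apply sqrt_le_1_alt. pose proof (lnln_ge1 b r). nra.
Qed.

Lemma anal K M z : 0 <= K -> K <= 3 * M -> exp (2 * exp 1) <= M -> 1 <= z ->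
  K * phi z - (z - 1) <= 7 * M ^ 2 * ln (ln M).
Proof.
  intros HK HKM HM Hz. pose proof e_ge2 as He.
  assert (HM5 : 5 <= M) by (pose proof (exp_ineq1_le (2 * exp 1)); lra).
  assert (HlnM : 2 * exp 1 <= ln M) by (rewrite <- (ln_exp (2 * exp 1)); apply ln_le'; auto; apply exp_pos).
  assert (HL : 1 <= ln (ln M)).
  { assert (ln (2 * exp 1) <= ln (ln M)) by (apply ln_le'; auto; pose proof (exp_pos 1); lra).
    rewrite ln_mult in H by (try lra; apply exp_pos). rewrite ln_exp in H. pose proof ln_lt_2. lra. }
  set (L := ln (ln M)) in *.
  unfold phi. destruct (Rle_dec (exp (exp 1)) z) as [Hze|Hze].
  2:{ nra. }
  pose proof (lnln_ge1 z Hze) as Hl. pose proof ee_gt1.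
  set (l := ln (ln z)) in *.
  assert (Hzp : 0 < z) by lra.
  rewrite sqrt_mult by lra.
  set (s := sqrt z). set (t := sqrt l).
  assert (Hs2 : s * s = z) by (apply sqrt_sqrt; lra).
  assert (Ht2 : t * t = l) by (apply sqrt_sqrt; lra).
  assert (Hs0 : 0 <= s) by apply sqrt_pos.
  assert (Ht0 : 0 <= t) by apply sqrt_pos.
  destruct (Rle_dec (324 * M ^ 4) z) as [Hbig|Hsmall].
  - assert (Hs18 : 18 * M ^ 2 <= s).
    { unfold s. rewrite <- (sqrt_square (18 * M ^ 2)) by nra. apply sqrt_le_1_alt. nra. }
    assert (Hlnz : ln z <= 2 * s).
    { assert (0 < s) by nra.
      rewrite <- Hs2, ln_mult by auto. pose proof (ln_le_sub1 s H0). lra. }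
    assert (Hlz : 0 < ln z).
    { rewrite <- ln_1. apply ln_increasing; lra. }
    assert (l <= 2 * s) by (pose proof (ln_le_sub1 _ Hlz); unfold l; lra).
    assert (K * K <= 9 * M ^ 2) by nra.
    assert (K * K * l <= 9 * M ^ 2 * l) by (apply Rmult_le_compat_r; lra).
    assert (9 * M ^ 2 * l <= 9 * M ^ 2 * (2 * s)) by (apply Rmult_le_compat_l; nra).
    assert (18 * M ^ 2 * s <= s * s) by (apply Rmult_le_compat_r; lra).
    assert (HKK : K * K * l <= s * s) by lra.
    assert (K * t * (K * t) <= s * s) by (rewrite <- Ht2 in HKK; nra).
    assert (K * t <= s).
    { destruct (Rle_dec (K*t) s); auto. assert (0 <= K * t) by nra. nra. }
    nra.
  - assert (Hlz : 0 < ln z).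
    { rewrite <- ln_1. apply ln_increasing; lra. }
    assert (ln z <= ln M ^ 3).
    { assert (ln z <= ln (324 * M ^ 4)) by (apply ln_le'; lra).
      rewrite ln_mult, ln_pow in H0 by nra.
      replace (INR 4) with 4 in H0 by (simpl; lra).
      assert (ln 324 <= 48).
      { rewrite <- (ln_exp 48). apply ln_le'. lra.
        replace 48 with (24 + 24) by lra. rewrite exp_plus.
        pose proof (exp_ineq1_le 24). nra. }
      nra. }
    assert (l <= 3 * L).
    { unfold l, L. replace 3 with (INR 3) by (simpl; lra). rewrite <- ln_pow by lra.
      apply ln_le'; auto. }
    assert (K * s * t <= s * s + K * K * (t * t) / 4).
    { pose proof (Rle_0_sqr (s - K * t / 2)). unfold Rsqr in *. nra. }
    assert (K * K <= 9 * M ^ 2) by nra.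
    assert (K * K * l <= 9 * M ^ 2 * (3 * L)).
    { apply Rmult_le_compat; nra. }
    assert (4 <= M ^ 2 * L) by nra.
    rewrite Ht2, Hs2 in *. nra.
Qed.

Lemma abs_between x y : Rabs x <= y -> -y <= x <= y.
Proof. intros H. split; [pose proof (Rle_abs (-x)); rewrite Rabs_Ropp in H0 | pose proof (Rle_abs x)]; lra. Qed.

Lemma fr_shift (l : list R) a : fold_right Rplus a l = fold_right Rplus 0 l + a.
Proof. induction l; simpl; lra. Qed.

Lemma seg_cons f k n : (k < n)%nat -> seg_sum f k n = f (S k) + seg_sum f (S k) n.
Proof. intros H. unfold seg_sum. replace (n - k)%nat with (S (n - S k)) by lia. reflexivity. Qed.

Lemma seg_nn f n : seg_sum f n n = 0.
Proof. unfold seg_sum. rewrite Nat.sub_diag. reflexivity. Qed.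

Lemma seg0_S f k : seg_sum f 0 (S k) = seg_sum f 0 k + f (S k).
Proof. unfold seg_sum. rewrite !Nat.sub_0_r. rewrite seq_S, map_app, fold_right_app.
  simpl. rewrite fr_shift. lra. Qed.

Lemma arr_split f n k : (k <= n)%nat -> seg_sum f 0 n = seg_sum f 0 k + seg_sum f k n.
Proof. induction k; intros H.
- unfold seg_sum at 2. simpl. lra.
- rewrite IHk by lia. rewrite seg0_S, (seg_cons f k n) by lia. lra. Qed.

Lemma seg_nonneg f k n : (forall i, (1 <= i <= n)%nat -> 0 <= f i) -> 0 <= seg_sum f k n.
Proof. intros H. unfold seg_sum.
  assert (forall x, In x (seq (S k) (n - k)) -> 0 <= f x).
  { intros x Hx. apply in_seq in Hx. apply H. lia. }
  revert H0. generalize (seq (S k) (n - k)). induction l; simpl; intros; [lra|].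
  pose proof (H0 a (or_introl eq_refl)). pose proof (IHl (fun x Hx => H0 x (or_intror Hx))). lra.
Qed.

Lemma depart_S U V j i :
  depart U V (S j) (S i) = Rmax (depart U V j (S i)) (depart U V (S j) i) + V (S j) (S i).
Proof. reflexivity. Qed.

Lemma depart_0 U V j : depart U V (S j) 0 = 0.
Proof. reflexivity. Qed.

Lemma depart_nonneg J n U V
  (HU : forall i, (1 <= i <= n)%nat -> 0 <= U i)
  (HV : forall j i, (1 <= j <= J)%nat -> (1 <= i <= n)%nat -> 0 <= V j i) :
  forall j i, (j <= J)%nat -> (i <= n)%nat -> 0 <= depart U V j i.
Proof.
  induction j; intros i Hj Hi.
  - simpl. unfold arrival. apply seg_nonneg. intros. apply HU. lia.
  - induction i. rewrite depart_0; lra.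
    rewrite depart_S. pose proof (IHj (S i) ltac:(lia) Hi).
    pose proof (Rmax_l (depart U V j (S i)) (depart U V (S j) i)).
    pose proof (HV (S j) (S i) ltac:(lia) ltac:(lia)). lra.
Qed.

Section Core.
Variables (J n : nat) (U : nat -> R) (V : nat -> nat -> R) (lam m G : R) (mu : nat -> R).
Hypothesis Hn : (1 <= n)%nat.
Hypothesis Hlam : 0 < lam.
Hypothesis HG : 0 <= G.
Hypothesis HU : forall i, (1 <= i <= n)%nat -> 0 <= U i.
Hypothesis HV : forall j i, (1 <= j <= J)%nat -> (1 <= i <= n)%nat -> 0 <= V j i.
Hypothesis Hmu : forall j, (1 <= j <= J)%nat -> 0 < mu j /\ / mu j <= m.
Hypothesis HTU : forall k, (k <= n)%nat ->
  Rabs (seg_sum U k n - / lam * INR (n - k)) <= G * phi (INR (n - k)).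
Hypothesis HTV : forall j k, (1 <= j <= J)%nat -> (k <= n)%nat ->
  Rabs (seg_sum (V j) k n - / mu j * INR (n - k)) <= G * phi (INR (n - k)).

Definition Inv (j : nat) : Prop := forall k, (1 <= k <= n)%nat -> exists z,
  (n + 1 <= z + k)%nat /\ (z <= n)%nat /\
  depart U V j k <= arrival U n - / lam * (INR z - 1)
     + m * (INR z - (INR n - INR k + 1) + INR j) + (2 * INR j + 1) * G * phi (INR z).

Lemma phi_le a b : (a <= b)%nat -> G * phi (INR a) <= G * phi (INR b).
Proof. intros. apply Rmult_le_compat_l; auto. apply phi_mono. apply le_INR; auto. Qed.

Lemma inv0 : Inv 0.
Proof.
  intros k Hk. exists (n - k + 1)%nat. split; [lia|]. split; [lia|].
  simpl depart. unfold arrival. rewrite (arr_split U n k) by lia.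
  pose proof (abs_between _ _ (HTU k ltac:(lia))) as [H1 _].
  rewrite plus_INR, minus_INR by lia. simpl INR.
  rewrite minus_INR in H1 by lia.
  pose proof (phi_le (n - k) (n - k + 1) ltac:(lia)).
  rewrite plus_INR, minus_INR in H by lia. simpl INR in H.
  replace (INR n - INR k + 1 - (INR n - INR k + 1) + 0) with 0 by ring.
  lra.
Qed.

Lemma invS j : (S j <= J)%nat -> Inv j -> Inv (S j).
Proof.
  intros HjJ HI.
  destruct (Hmu (S j) ltac:(lia)) as [Hmu0 Hmum].
  set (mj := mu (S j)) in *.
  assert (HQ : forall i, (1 <= i <= n)%nat -> exists z k0,
    (1 <= k0 <= i)%nat /\ (n + 1 <= z + k0)%nat /\ (z <= n)%nat /\
    depart U V (S j) i + seg_sum (V (S j)) i n <= arrival U n - / lam * (INR z - 1)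
     + m * (INR z - (INR n - INR k0 + 1) + INR j) + / mj * (INR n - INR k0 + 1)
     + (2 * INR j + 2) * G * phi (INR z)).
  { induction i; intros Hi; [lia|].
    rewrite depart_S.
    assert (Hsplit : seg_sum (V (S j)) (S i) n + V (S j) (S i) = seg_sum (V (S j)) i n)
      by (rewrite (seg_cons _ i n) by lia; lra).
    destruct (HI (S i) ltac:(lia)) as (z & Hz1 & Hz2 & Hz3).
    assert (Hfirst : depart U V j (S i) + seg_sum (V (S j)) i n <= arrival U n - / lam * (INR z - 1)
     + m * (INR z - (INR n - INR (S i) + 1) + INR j) + / mj * (INR n - INR (S i) + 1)
     + (2 * INR j + 2) * G * phi (INR z)).
    { pose proof (abs_between _ _ (HTV (S j) i ltac:(lia) ltac:(lia))) as [_ H1].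
      pose proof (phi_le (n - i) z ltac:(lia)).
      rewrite minus_INR in H1, H by lia. rewrite S_INR in *. fold mj in H1.
      replace (INR n - (INR i + 1) + 1) with (INR n - INR i) by ring.
      replace ((2 * INR j + 2) * G * phi (INR z)) with ((2 * INR j + 1) * G * phi (INR z) + G * phi (INR z)) by ring.
      lra. }
    destruct (Rle_dec (depart U V (S j) i) (depart U V j (S i))) as [Hab|Hab].
    - rewrite Rmax_left by auto. exists z, (S i). split; [lia|]. split; [lia|]. split; [lia|]. lra.
    - rewrite Rmax_right by lra.
      destruct i.
      + exfalso. rewrite depart_0 in Hab.
        pose proof (depart_nonneg J n U V HU HV j 1 ltac:(lia) ltac:(lia)). lra.
      + destruct (IHi ltac:(lia)) as (z' & k0 & H1 & H2 & H3 & H4).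
        exists z', k0. split; [lia|]. split; [lia|]. split; [lia|]. lra. }
  intros k Hk. destruct (HQ k Hk) as (z & k0 & H1 & H2 & H3 & H4).
  exists z. split; [lia|]. split; [lia|].
  pose proof (abs_between _ _ (HTV (S j) k ltac:(lia) ltac:(lia))) as [H5 _].
  pose proof (phi_le (n - k) z ltac:(lia)).
  rewrite minus_INR in H5, H by lia. fold mj in H5.
  assert (Hd : / mj * (INR k - INR k0 + 1) <= m * (INR k - INR k0 + 1)).
  { apply Rmult_le_compat_r; auto. pose proof (le_INR k0 k ltac:(lia)). lra. }
  rewrite S_INR.
  replace (m * (INR z - (INR n - INR k + 1) + (INR j + 1))) with
    (m * (INR z - (INR n - INR k0 + 1) + INR j) + m * (INR k - INR k0 + 1)) by ring.
  replace ((2 * (INR j + 1) + 1) * G * phi (INR z)) with ((2 * INR j + 2) * G * phi (INR z) + G * phi (INR z)) by ring.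
  replace (/ mj * (INR n - INR k0 + 1)) with (/ mj * (INR k - INR k0 + 1) + / mj * (INR n - INR k)) in H4 by ring.
  lra.
Qed.

Lemma invJ : forall j, (j <= J)%nat -> Inv j.
Proof. induction j; intros. apply inv0. apply invS; auto. apply IHj; lia. Qed.

End Core.

Lemma gmax_ge_a Ga Gs (l : list nat) : Ga <= fold_right Rmax Ga (map Gs l).
Proof. induction l; simpl. lra. eapply Rle_trans; [apply IHl| apply Rmax_r]. Qed.

Lemma gmax_ge_s Ga Gs (l : list nat) j : In j l -> Gs j <= fold_right Rmax Ga (map Gs l).
Proof. induction l; simpl; intros H; [contradiction|]. destruct H as [<-|H].
  apply Rmax_l. eapply Rle_trans; [apply IHl; auto| apply Rmax_r]. Qed.

Lemma mmin_le (mu : nat -> R) a (l : list nat) j : In j l -> fold_right Rmin a (map mu l) <= mu j.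
Proof. induction l; simpl; intros H; [contradiction|]. destruct H as [<-|H].
  apply Rmin_l. eapply Rle_trans; [apply Rmin_r| apply IHl; auto]. Qed.

Lemma mmin_pos (mu : nat -> R) a (l : list nat) : 0 < a -> (forall j, In j l -> 0 < mu j) ->
  0 < fold_right Rmin a (map mu l).
Proof. induction l; simpl; intros Ha H; auto. apply Rmin_pos; auto. Qed.

Theorem theorem1
  (J n : nat) (U : nat -> R) (V : nat -> nat -> R)
  (lam : R) (mu : nat -> R) (Ga : R) (Gs : nat -> R)
  (HJ : (1 <= J)%nat) (Hn : (1 <= n)%nat)
  (HU : forall i, (1 <= i <= n)%nat -> 0 <= U i)
  (HV : forall j i, (1 <= j <= J)%nat -> (1 <= i <= n)%nat -> 0 <= V j i)
  (Hlam : 0 < lam)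
  (Hmu : forall j, (1 <= j <= J)%nat -> 0 < mu j)
  (HGa : 0 <= Ga)
  (HGs : forall j, (1 <= j <= J)%nat -> 0 <= Gs j)
  (HarrU : forall k, (k < n)%nat ->
     Rabs (seg_sum U k n - / lam * INR (n - k)) <= Ga * phi (INR (n - k)))
  (HserV : forall j k, (1 <= j <= J)%nat -> (k < n)%nat ->
     Rabs (seg_sum (V j) k n - / mu j * INR (n - k)) <= Gs j * phi (INR (n - k)))
  (HGam : exp (2 * exp 1) <= lam * Gamma_max Ga Gs J)
  (Hrho : lam / mu_min mu J < 1) :
  let Gam := Gamma_max Ga Gs J in
  let rho := lam / mu_min mu J in
  sojourn U V J n <=
    7 * INR J ^ 2 * Gam ^ 2 * lam / (1 - rho)
      * ln (ln (INR J * lam * Gam / (1 - rho)))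
    + INR J / lam.
Proof.
  intros Gam rho.
  assert (HGaG : Ga <= Gam) by apply gmax_ge_a.
  assert (HGsG : forall j, (1 <= j <= J)%nat -> Gs j <= Gam).
  { intros j Hj. apply gmax_ge_s. apply in_seq. lia. }
  assert (HG0 : 0 <= Gam) by lra.
  set (mm := mu_min mu J) in *.
  assert (Hmm : 0 < mm).
  { apply mmin_pos. apply Hmu; lia. intros j Hj. apply in_seq in Hj. apply Hmu; lia. }
  assert (Hmmj : forall j, (1 <= j <= J)%nat -> mm <= mu j).
  { intros j Hj. apply mmin_le. apply in_seq. lia. }
  assert (Hrho0 : 0 < rho) by (unfold rho; apply Rdiv_lt_0_compat; auto).
  fold rho in Hrho.
  assert (Hphi0 : forall x, 0 <= phi x) by apply phi_nonneg.
  assert (HTU : forall k, (k <= n)%nat ->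
    Rabs (seg_sum U k n - / lam * INR (n - k)) <= Gam * phi (INR (n - k))).
  { intros k Hk. destruct (Nat.eq_dec k n) as [->|Hkn].
    - rewrite seg_nn, Nat.sub_diag. simpl INR. rewrite Rmult_0_r, Rminus_0_r, Rabs_R0.
      pose proof (Hphi0 0). nra.
    - eapply Rle_trans; [apply HarrU; lia|]. apply Rmult_le_compat_r; auto. }

  assert (HTV : forall j k, (1 <= j <= J)%nat -> (k <= n)%nat ->
    Rabs (seg_sum (V j) k n - / mu j * INR (n - k)) <= Gam * phi (INR (n - k))).
  { intros j k Hj Hk. destruct (Nat.eq_dec k n) as [->|Hkn].
    - rewrite seg_nn, Nat.sub_diag. simpl INR. rewrite Rmult_0_r, Rminus_0_r, Rabs_R0.
      pose proof (Hphi0 0). nra.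
    - eapply Rle_trans; [apply HserV; lia|]. apply Rmult_le_compat_r; auto. }
  assert (Hmu' : forall j, (1 <= j <= J)%nat -> 0 < mu j /\ / mu j <= / mm).
  { intros j Hj. split. apply Hmu; auto. apply Rinv_le_contravar; auto. }
  destruct (invJ J n U V lam (/ mm) Gam mu Hn HG0 HU HV Hmu' HTU HTV J (le_n J) n ltac:(lia))
    as (z & Hz1 & Hz2 & HD).
  unfold sojourn.
  replace (INR n - INR n + 1) with 1 in HD by ring.
  assert (HzR : 1 <= INR z) by (apply (le_INR 1); lia).
  assert (HJR : 1 <= INR J) by (apply (le_INR 1); lia).
  set (c := (1 - rho) / lam).
  assert (Hc : 0 < c) by (unfold c; apply Rdiv_lt_0_compat; lra).
  assert (Hm : / mm = rho / lam) by (unfold rho; field; lra).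
  set (M := INR J * lam * Gam / (1 - rho)).
  set (K := (2 * INR J + 1) * Gam / c).
  assert (HM : exp (2 * exp 1) <= M).
  { eapply Rle_trans; [apply HGam|]. fold Gam. unfold M.
    apply (Rmult_le_reg_r (1 - rho)); [lra|].
    replace (INR J * lam * Gam / (1 - rho) * (1 - rho)) with (INR J * (lam * Gam)) by (field; lra).
    assert (0 <= lam * Gam) by nra. nra. }
  assert (HK0 : 0 <= K) by (unfold K; unfold Rdiv; apply Rmult_le_pos; [nra| left; apply Rinv_0_lt_compat; lra]).
  assert (HKM : K <= 3 * M).
  { unfold K, M, c. apply (Rmult_le_reg_r ((1 - rho) / lam)). apply Rdiv_lt_0_compat; lra.
    replace ((2 * INR J + 1) * Gam / ((1 - rho) / lam) * ((1 - rho) / lam)) with ((2 * INR J + 1) * Gam)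
      by (field; lra).
    replace (3 * (INR J * lam * Gam / (1 - rho)) * ((1 - rho) / lam)) with (3 * INR J * Gam)
      by (field; lra). nra. }
  pose proof (anal K M (INR z) HK0 HKM HM HzR) as Han.
  assert (E1 : (2 * INR J + 1) * Gam * phi (INR z) = c * (K * phi (INR z))) by (unfold K; field; lra).
  assert (E3 : c * (7 * M ^ 2 * ln (ln M)) =
     7 * INR J ^ 2 * Gam ^ 2 * lam / (1 - rho) * ln (ln M)) by (unfold c, M; field; lra).
  fold M. rewrite <- E3.
  assert (Hc2 : c * (K * phi (INR z) - (INR z - 1)) <= c * (7 * M ^ 2 * ln (ln M)))
    by (apply Rmult_le_compat_l; lra).
  assert (E4 : / lam * (INR z - 1) - / mm * (INR z - 1) = c * (INR z - 1))
    by (rewrite Hm; unfold c; field; lra).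
  assert (E5 : / mm * INR J <= INR J / lam).
  { rewrite Hm. unfold Rdiv. replace (rho * / lam * INR J) with (rho * (INR J * / lam)) by ring.
    assert (0 < INR J * / lam) by (apply Rmult_lt_0_compat; [lra| apply Rinv_0_lt_compat; lra]).
    nra. }
  nra.
Qed.
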